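(* Let $\mathcal{G}\subseteq C(\mathbb{R},\mathbb{R})$ be nonempty. The following conditions are equivalent: (1) $\{\mathrm{CL}(\mathbb{R})\cap\mathcal{P}(X):X\subseteq\mathbb{R}\}\subseteq\mathcal{K}_\mathcal{G}$; (2) $\{\mathcal{A}_x:x\in\mathbb{R}\}\subseteq\mathcal{K}_\mathcal{G}$, where $\mathcal{A}_x=\{E\in\mathrm{CL}(\mathbb{R}):x\notin E\}$; (3) for every $x\in\mathbb{R}$ there exists $f\in C(\mathbb{R},\mathbb{R})$ such that $E_\mathcal{G}(\{f\})=\mathcal{A}_x$.
   Context: $\mathrm{CL}(\mathbb{R})$ is the family of closed subsets of $\mathbb{R}$ and $\mathcal{P}(X)$ the power set of $X$. For $\mathcal{G}\subseteq C(\mathbb{R},\mathbb{R})$ let $R_\mathcal{G}=\{(f,E)\in C(\mathbb{R},\mathbb{R})\times\mathrm{CL}(\mathbb{R}):(\exists g\in\mathcal{G})\, f\restriction E=g\restriction E\}$; for $\mathcal{F}\subseteq C(\mathbb{R},\mathbb{R})$ put $E_\mathcal{G}(\mathcal{F})=\{E\in\mathrm{CL}(\mathbb{R}):(\forall f\in\mathcal{F})\,(f,E)\in R_\mathcal{G}\}$, and let $\mathcal{K}_\mathcal{G}=\{E_\mathcal{G}(\mathcal{F}):\mathcal{F}\subseteq C(\mathbb{R},\mathbb{R})\}$. *)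

(* Defs.v *)
From Stdlib Require Import Reals.
Open Scope R_scope.

(* C(R,R) is represented by functions R -> R together with [continuity f];
   subsets of C(R,R) are predicates [(R -> R) -> Prop] all of whose members
   are continuous.  Families of closed sets are predicates on
   [R -> Prop]; membership of E in a family is only consulted for closed E. *)

Definition CRR (f : R -> R) : Prop := continuity f.

Definition CL (E : R -> Prop) : Prop := closed_set E.

Definition restr_eq (f g : R -> R) (E : R -> Prop) : Prop :=
  forall x, E x -> f x = g x.

Definition R_G (G : (R -> R) -> Prop) (f : R -> R) (E : R -> Prop) : Prop :=
  CRR f /\ CL E /\ exists g, G g /\ restr_eq f g E.

Definition E_G (G F : (R -> R) -> Prop) (E : R -> Prop) : Prop :=
  CL E /\ forall f, F f -> R_G G f E.

Definition fam_eq (A B : (R -> Prop) -> Prop) : Prop :=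
  forall E, CL E -> (A E <-> B E).

Definition in_K_G (G : (R -> R) -> Prop) (A : (R -> Prop) -> Prop) : Prop :=
  exists F : (R -> R) -> Prop,
    (forall f, F f -> CRR f) /\ fam_eq A (E_G G F).

Definition CL_sub (X : R -> Prop) (E : R -> Prop) : Prop :=
  CL E /\ forall y, E y -> X y.

Definition A_ (x : R) (E : R -> Prop) : Prop := CL E /\ ~ E x.

Definition single (f : R -> R) (h : R -> R) : Prop := h = f.

(* Main.v *)
Require Import Defs.
From Stdlib Require Import Reals Classical Lra.
Open Scope R_scope.

Lemma closed_single (x : R) : CL (fun y => y = x).
Proof.
  unfold CL, closed_set, open_set, complementary, neighbourhood.
  intros y Hy.
  assert (Hp : 0 < Rabs (y - x)).
  { apply Rabs_pos_lt. intro H; apply Hy; lra. }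
  exists (mkposreal _ Hp). intros z Hz Hzx. unfold disc in Hz. simpl in Hz.
  subst z. rewrite Rabs_minus_sym in Hz. lra.
Qed.

Lemma in_K_G_ext G A B : fam_eq A B -> in_K_G G A -> in_K_G G B.
Proof.
  intros HAB [F [HF HE]]. exists F. split; auto.
  intros E HE'. rewrite <- (HE E HE'). symmetry. apply HAB; auto.
Qed.

Theorem theorem4p2 (G : (R -> R) -> Prop)
  (HGC : forall g, G g -> CRR g)
  (HGne : exists g, G g) :
  ((forall X : R -> Prop, in_K_G G (CL_sub X)) <->
   (forall x : R, in_K_G G (A_ x))) /\
  ((forall x : R, in_K_G G (A_ x)) <->
   (forall x : R, exists f, CRR f /\ fam_eq (E_G G (single f)) (A_ x))).
Proof.
  split; split.
  - intros H1 x. apply (in_K_G_ext G (CL_sub (fun y => y <> x))); [|apply H1].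
    intros E HE. unfold CL_sub, A_. split.
    + intros [_ H]. split; auto. intro Ex. apply (H x Ex); reflexivity.
    + intros [_ H]. split; auto. intros y Ey Eq. subst y. auto.
  - intros H2 X.
    exists (fun f => exists x, ~ X x /\ exists Fx,
               (forall f, Fx f -> CRR f) /\ fam_eq (A_ x) (E_G G Fx) /\ Fx f).
    split.
    + intros f [x [_ [Fx [HFx [_ Hf]]]]]. auto.
    + intros E HE. unfold CL_sub, E_G. split.
      * intros [_ HEX]. split; auto.
        intros f [x [HnX [Fx [HFx [Heq Hf]]]]].
        assert (HA : A_ x E). { split; [auto|]. intro Ex. apply HnX; auto. }
        apply (proj1 (Heq E HE)) in HA. destruct HA as [_ HA]. auto.
      * intros [_ HR]. split; auto. intros y Ey.
        apply NNPP. intro HnX.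
        destruct (H2 y) as [Fy [HFy Heq]].
        assert (HEG : E_G G Fy E).
        { split; auto. intros f Hf. apply HR. exists y. split; auto.
          exists Fy. auto. }
        apply (proj2 (Heq E HE)) in HEG. destruct HEG as [_ HEG]. auto.
  - intros H2 x. destruct (H2 x) as [F [HF Heq]].
    assert (HnA : ~ E_G G F (fun y => y = x)).
    { intro H. apply (proj2 (Heq _ (closed_single x))) in H.
      destruct H as [_ H]. apply H. reflexivity. }
    assert (Hex : exists f, F f /\ ~ R_G G f (fun y => y = x)).
    { apply NNPP. intro Hn. apply HnA. split; [apply closed_single|].
      intros f Hf. apply NNPP. intro Hr. apply Hn. exists f. auto. }
    destruct Hex as [f [Hf Hnr]].
    exists f. split; [auto|].
    intros E HE. split.
    + intros [_ HR]. split; auto. intro Ex.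
      destruct (HR f eq_refl) as [Hc [_ [g [Hg Hfg]]]].
      apply Hnr. split; auto. split; [apply closed_single|].
      exists g. split; auto. intros y Hy. subst y. auto.
    + intros HA. apply (proj1 (Heq E HE)) in HA. destruct HA as [_ HA].
      split; auto. intros h Hh. unfold single in Hh. subst h. auto.
  - intros H3 x. destruct (H3 x) as [f [Hf Heq]].
    exists (single f). split.
    + intros h Hh. unfold single in Hh. subst h. auto.
    + intros E HE. symmetry. auto.
Qed.
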